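(* Let $P<G$ be finite groups and $U,V$ irreducible $\mathbb{F}G$-modules such that: (i) $\dim\mathrm{End}_P(U)\geq2$ and $\dim\mathrm{End}_P(V)\geq2$; (ii) the module $W:=(1_P){\uparrow}^G$ is either a direct sum $1_G\oplus A$ or a uniserial module with composition factors $1_G,A,1_G$, where $A\not\cong1_G$. Then $U\otimes V$ is reducible.
   Context: $\mathbb{F}$ is an algebraically closed field; $1_X$ denotes the trivial module of a group $X$. *)

(* Defs.v *)
From HB Require Import structures.
From mathcomp Require Import all_boot all_order all_algebra all_fingroup all_solvable.
From mathcomp Require Import all_field all_character.
From mathcomp Require Import mxtens.

Set Implicit Arguments.
Unset Strict Implicit.
Unset Printing Implicit Defensive.

Import GRing.Theory.
Local Open Scope ring_scope.

Section Defs.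

Variable F : fieldType.
Variable gT : finGroupType.

Lemma triv_mx_repr (G : {group gT}) : mx_repr G (fun _ : gT => (1%:M : 'M[F]_1)).
Proof. by split=> // x y _ _; rewrite mulmx1. Qed.
Definition triv_repr (G : {group gT}) := MxRepresentation (triv_mx_repr G).

Section Tensor.
Variables (G : {group gT}) (m n : nat).
Variables (rU : mx_representation F G m) (rV : mx_representation F G n).
Lemma tens_mx_repr : mx_repr G (fun g => rU g *t rV g).
Proof.
split=> [|x y Gx Gy].
  rewrite !repr_mx1; apply/matrixP=> i j.
  case: (mxtens_indexP i)=> i0 i1; case: (mxtens_indexP j)=> j0 j1.
  rewrite tensmxE !mxE (inj_eq (can_inj (@mxtens_indexK _ _))) xpair_eqE.
  by case: (i0 == j0); case: (i1 == j1); rewrite /= ?mulr1 ?mulr0.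
by rewrite tensmx_mul !repr_mxM.
Qed.
Definition tens_repr := MxRepresentation tens_mx_repr.
End Tensor.

Section DSum.
Variables (G : {group gT}) (m n : nat).
Variables (rU : mx_representation F G m) (rV : mx_representation F G n).
Lemma dsum_mx_repr :
  mx_repr G (fun g => block_mx (rU g) 0 0 (rV g) : 'M[F]_(m + n)).
Proof.
split=> [|x y Gx Gy]; first by rewrite !repr_mx1 -scalar_mx_block.
by rewrite mulmx_block !mulmx0 !mul0mx !addr0 !add0r !repr_mxM.
Qed.
Definition dsum_repr := MxRepresentation dsum_mx_repr.
End DSum.

(* The induced module (1_P)^G, realized as the permutation module on the
   right cosets of P in G. *)
Section Induced.
Variables (P G : {group gT}).
Hypothesis sPG : P \subset G.

Local Notation C := (rcosets P G).
Local Notation N := #|C|.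

Definition coset_mx (g : gT) : 'M[F]_N :=
  \matrix_(i < N, j < N) ((enum_val i :* g)%g == enum_val j)%:R.

Lemma coset_mx_repr : mx_repr G coset_mx.
Proof.
split=> [|x y Gx Gy].
  apply/matrixP=> i j; rewrite !mxE rcoset1.
  by rewrite (inj_eq enum_val_inj).
apply/matrixP=> i j; rewrite !mxE.
have Ci : enum_val i \in C by apply: enum_valP.
have Cix : (enum_val i :* x)%g \in C.
  case/rcosetsP: Ci => z Gz ->; apply/rcosetsP; exists (z * x)%g.
    by rewrite groupM.
  by rewrite rcosetM.
rewrite (bigD1 (enum_rank_in Cix (enum_val i :* x)%g)) //= !mxE enum_rankK_in //.
rewrite eqxx mul1r big1 ?addr0.
  by rewrite rcosetM.
move=> k nk; rewrite !mxE.
case: eqP => [e|]; last by rewrite mul0r.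
by case/eqP: nk; apply: enum_val_inj; rewrite enum_rankK_in //; apply/esym/eqP.
Qed.
Definition induced_triv_repr := MxRepresentation coset_mx_repr.
End Induced.

(* dim End_P(U) for an FG-module U and P a subgroup of G: the dimension of the
   centralizer of the enveloping algebra of the restriction U|_P. *)
Definition dim_End_res (G P : {group gT}) n (rU : mx_representation F G n)
  (sPG : P \subset G) : nat :=
  \rank 'C(enveloping_algebra_mx (subg_repr rU sPG))%MS.

Definition mx_uniserial (G : {group gT}) n (rW : mx_representation F G n) :=
  forall U V : 'M[F]_n, mxmodule rW U -> mxmodule rW V ->
    (U <= V)%MS \/ (V <= U)%MS.

End Defs.

(* Main.v *)
Require Import Defs.
From HB Require Import structures.
From mathcomp Require Import all_boot all_order all_algebra all_fingroup all_solvable.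
From mathcomp Require Import all_field all_character.
From mathcomp Require Import mxtens.
From Stdlib Require Import Lia.
From mathcomp Require Import zify.
Set Implicit Arguments. Unset Strict Implicit. Unset Printing Implicit Defensive.
Import GRing.Theory.
Local Open Scope ring_scope.
Section Gen.
Variables (F : closedFieldType) (gT : finGroupType) (G P : {group gT}).
Hypothesis sPG : P \subset G.
Local Open Scope group_scope.

Local Notation N := #|rcosets P G|.
Local Notation W := (induced_triv_repr F P G).

Definition cst (i : 'I_N) : {set gT} := enum_val i.
Definition rp (i : 'I_N) : gT := repr (cst i).

Lemma cst_in i : cst i \in rcosets P G.
Proof. exact: enum_valP. Qed.

Lemma cstE i : cst i = P :* rp i.
Proof.
rewrite /rp; have /rcosetsP[x Gx ->] := cst_in i.
by rewrite rcoset_repr.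
Qed.

Lemma rpG i : rp i \in G.
Proof.
have /rcosetsP[x Gx Ex] := cst_in i.
rewrite /rp Ex; case: repr_rcosetP => p Pp; rewrite groupM //.
exact: (subsetP sPG).
Qed.

Lemma cst_inj : injective cst.
Proof. exact: enum_val_inj. Qed.

Definition sigma (g : gT) (i : 'I_N) : 'I_N :=
  odflt i [pick j | cst j == cst i :* g].

Lemma sigmaE g i : g \in G -> cst (sigma g i) = cst i :* g.
Proof.
move=> Gg; rewrite /sigma; case: pickP => [j /eqP //|none].
have Cig : cst i :* g \in rcosets P G.
  rewrite cstE -rcosetM; apply/rcosetsP; exists (rp i * g)%g => //.
  by rewrite groupM ?rpG.
have := none (enum_rank_in Cig (cst i :* g)).
by rewrite /cst enum_rankK_in // eqxx.
Qed.

Lemma sigma_inj g : g \in G -> injective (sigma g).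
Proof.
move=> Gg i j e; apply: cst_inj.
have := congr1 cst e; rewrite !sigmaE //.
by move/(congr1 (fun A => A :* g^-1)%g); rewrite -!rcosetM mulgV !rcoset1.
Qed.

Lemma coset_mxE g i j : g \in G -> W g i j = (sigma g i == j)%:R.
Proof.
move=> Gg; rewrite /= /coset_mx mxE -/(cst i) -/(cst j) -sigmaE //.
by rewrite (inj_eq cst_inj).
Qed.

Lemma row_coset_mx g i : g \in G -> row i (W g) = delta_mx 0 (sigma g i).
Proof.
move=> Gg; apply/rowP=> j; have := coset_mxE i j Gg.
by rewrite !mxE => ->; rewrite eq_sym.
Qed.

Lemma sigma_trans i j : exists2 g, g \in G & sigma g i = j.
Proof.
exists ((rp i)^-1 * rp j)%g; first by rewrite groupM ?groupV ?rpG.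
apply: cst_inj; rewrite sigmaE ?groupM ?groupV ?rpG //.
by rewrite cstE -rcosetM mulgA mulgV mul1g -cstE.
Qed.

Local Close Scope group_scope.
Section Rep.
Variables (k : nat) (rho : mx_representation F G k).

Definition Zc (Z : 'M[F]_k) i := rho ((rp i)^-1)%g *m Z *m rho (rp i).

Definition centP (Z : 'M[F]_k) := forall p, p \in P -> Z *m rho p = rho p *m Z.

Lemma ZcS Z g i : centP Z -> g \in G ->
  Zc Z (sigma g i) = rho (g^-1)%g *m Zc Z i *m rho g.
Proof.
move=> cZ Gg; have : rp (sigma g i) \in (P :* (rp i * g))%g.
  by rewrite rcosetM -cstE -sigmaE // cstE rcoset_refl.
rewrite /Zc; case/rcosetP=> p Pp ->.
have Gp := subsetP sPG p Pp; have Gi := rpG i.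
rewrite !invMg !repr_mxM ?groupM ?groupV //.
rewrite !mulmxA -(mulmxA _ Z (rho p)) cZ // mulmxA.
rewrite -(mulmxA _ (rho (p^-1)%g) (rho p)) -(repr_mxM rho (groupVr Gp) Gp).
by rewrite mulVg repr_mx1 mulmx1.
Qed.

Lemma sum_cent (H : 'I_N -> 'M[F]_k) :
  (forall g i, g \in G -> H (sigma g i) = rho (g^-1)%g *m H i *m rho g) ->
  centgmx rho (\sum_i H i).
Proof.
move=> HS; apply/centgmxP=> g Gg.
rewrite mulmx_suml mulmx_sumr [in RHS](reindex_inj (sigma_inj Gg)) /=.
apply: eq_bigr => i _; rewrite HS // !mulmxA -(repr_mxM _ Gg (groupVr Gg)).
by rewrite mulgV repr_mx1 mul1mx.
Qed.

Definition Mx (Z : 'M[F]_k) : 'M[F]_(N, k * k) := \matrix_i mxvec (Zc Z i).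

Definition Lg g : 'M[F]_(k * k) :=
  lin_mx (mulmx (rho (g^-1)%g)) *m lin_mx (mulmxr (rho g)).

Lemma vecLg (X : 'M[F]_k) g :
  mxvec X *m Lg g = mxvec (rho (g^-1)%g *m X *m rho g).
Proof. by rewrite /Lg mulmxA !mul_vec_lin. Qed.

Lemma Mx_equiv Z g : centP Z -> g \in G -> W g *m Mx Z = Mx Z *m Lg g.
Proof.
move=> cZ Gg; apply/row_matrixP=> i.
rewrite !row_mul row_coset_mx // -rowE !rowK vecLg ZcS //.
Qed.

Lemma Mx_equiv_row Z g (w : 'rV[F]_N) : centP Z -> g \in G ->
  w *m W g *m Mx Z = mxvec (rho (g^-1)%g *m vec_mx (w *m Mx Z) *m rho g).
Proof.
move=> cZ Gg; rewrite -mulmxA Mx_equiv // mulmxA -{1}[w *m Mx Z]vec_mxK.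
by rewrite vecLg.
Qed.

End Rep.
End Gen.
Section Gen2.
Variables (F : closedFieldType) (gT : finGroupType) (G P : {group gT}).
Hypothesis sPG : P \subset G.
Local Notation N := #|rcosets P G|.
Local Notation W := (induced_triv_repr F P G).
Local Notation sigma := (@sigma gT G P).

Definition ones : 'cV[F]_N := const_mx 1.
Definition Smx : 'M[F]_N := kermx ones.

Lemma N_gt0 : (0 < N)%N.
Proof.
apply/card_gt0P; exists (P :* 1)%g; apply/rcosetsP; exists 1%g => //.
Qed.

Lemma W_ones g : g \in G -> W g *m ones = ones.
Proof.
move=> Gg; apply/colP=> i; rewrite mxE (bigD1 (sigma g i)) //=.
rewrite coset_mxE // eqxx !mxE mul1r big1 ?addr0 // => j nj.
by rewrite coset_mxE // eq_sym (negbTE nj) mul0r.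
Qed.

Lemma ones_W g : g \in G -> ones^T *m W g = ones^T.
Proof.
move=> Gg; apply/rowP=> j; rewrite mxE.
transitivity (\sum_i ((i == j)%:R : F)).
  rewrite [RHS](reindex_inj (sigma_inj sPG Gg)) /=; apply: eq_bigr => i _.
  by rewrite coset_mxE // !mxE mul1r.
rewrite (bigD1 j) //= eqxx big1 ?addr0 ?mxE // => i /negbTE -> //.
Qed.

Lemma Smx_module : mxmodule W Smx.
Proof.
apply/mxmoduleP=> g Gg; apply/sub_kermxP.
by rewrite -mulmxA W_ones // mulmx_ker.
Qed.

Lemma ones_module : mxmodule W (ones^T).
Proof. by apply/mxmoduleP=> g Gg; rewrite ones_W. Qed.

Lemma ones_neq0 : ones != 0.
Proof.
apply/negP=> /eqP/colP/(_ (Ordinal N_gt0)); rewrite !mxE => /eqP.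
by rewrite oner_eq0.
Qed.

Lemma rank_ones : \rank ones = 1%N.
Proof.
apply/eqP; rewrite eqn_leq rank_leq_col lt0n mxrank_eq0 ones_neq0.
by [].
Qed.

Lemma rank_onesT : \rank (ones^T) = 1%N.
Proof. by rewrite mxrank_tr rank_ones. Qed.

Lemma rank_Smx : \rank Smx = N.-1.
Proof. by rewrite /Smx mxrank_ker rank_ones subn1. Qed.

Lemma sub_Smx m (x : 'M[F]_(m, N)) : (x <= Smx)%MS = (x *m ones == 0).
Proof. by apply/sub_kermxP/eqP. Qed.

Lemma Wdiff_Smx m (x : 'M[F]_(m, N)) g : g \in G -> (x *m W g - x <= Smx)%MS.
Proof. by move=> Gg; rewrite sub_Smx mulmxBl -mulmxA W_ones // subrr. Qed.

Section Rep2.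
Variables (k : nat) (rho : mx_representation F G k).
Hypothesis irr : mx_irreducible rho.
Local Notation Zc := (@Zc F gT G P k rho).
Local Notation Mx := (@Mx F gT G P k rho).
Local Notation centP := (@centP F gT G P k rho).

Lemma absirr : mx_absolutely_irreducible rho.
Proof. exact: (@group_closure_closed_field F gT G). Qed.

Lemma cent_scalar A : centgmx rho A -> is_scalar_mx A.
Proof. exact: mx_abs_irr_cent_scalar absirr A. Qed.

Lemma Zc_scalar Z i : is_scalar_mx (Zc Z i) -> is_scalar_mx Z.
Proof.
case/is_scalar_mxP=> a Ea; apply/is_scalar_mxP; exists a.
have Gi := rpG sPG i.
have : rho (rp i) *m Zc Z i *m rho ((rp i)^-1)%g = Z.
  rewrite /Zc !mulmxA -(repr_mxM _ Gi (groupVr Gi)) mulgV repr_mx1 mul1mx.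
  by rewrite repr_mxK.
by rewrite Ea scalar_mxC -mulmxA -(repr_mxM _ Gi (groupVr Gi)) mulgV repr_mx1 mulmx1.
Qed.

Lemma rowMx Z i : row i (Mx Z) = mxvec (Zc Z i).
Proof. by rewrite rowK. Qed.

Lemma onesMx Z : centP Z -> (ones^T *m Mx Z <= mxvec (1%:M : 'M_k))%MS.
Proof.
move=> cZ.
have -> : ones^T *m Mx Z = mxvec (\sum_i Zc Z i).
  rewrite mulmx_sum_row linear_sum; apply: eq_bigr => i _.
  by rewrite !mxE scale1r rowMx.
rewrite memmx1; apply: cent_scalar; apply: (sum_cent sPG) => g i Gg.
exact: (ZcS sPG).
Qed.

Lemma nonscalar_notS Z : centP Z -> ~~ is_scalar_mx Z ->
  ~~ (Smx <= kermx (Mx Z))%MS.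
Proof.
move=> cZ nsZ; apply/negP=> sSK; case/negP: nsZ.
pose i0 := Ordinal N_gt0; pose d : 'rV[F]_N := delta_mx 0 i0.
apply: (@Zc_scalar Z i0); apply: cent_scalar; apply/centgmxP=> g Gg.
have H : (d *m W g - d <= kermx (Mx Z))%MS.
  by apply: (submx_trans _ sSK); apply: Wdiff_Smx.
move/sub_kermxP: H.
rewrite mulmxBl (Mx_equiv_row sPG) // -rowE rowMx mxvecK => /eqP.
rewrite subr_eq0 => /eqP/(can_inj (@mxvecK _ _ _)) E.
by rewrite -[in RHS]E !mulmxA -(repr_mxM _ Gg (groupVr Gg)) mulgV repr_mx1 mul1mx.
Qed.

End Rep2.
End Gen2.
Section Gen3.
Variables (F : closedFieldType) (gT : finGroupType) (G P : {group gT}).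
Hypothesis sPG : P \subset G.
Local Notation N := #|rcosets P G|.
Local Notation ones := (@ones F gT G P).

Lemma coreA k k' (MU : 'M[F]_(N, k)) (MV : 'M[F]_(N, k')) (v : 'rV[F]_k) :
  (MV^T *m MU <= v)%MS -> (ones^T *m MU <= v)%MS ->
  (forall x : 'rV[F]_N, x *m MV = 0 -> x *m ones = 0 -> x = 0) ->
  (MU <= v)%MS.
Proof.
move=> sVU sOU inj.
pose B := col_mx MV^T ones^T.
have sBU : (B *m MU <= v)%MS by rewrite mul_col_mx col_mx_sub sVU.
have fB : row_full B.
  rewrite /row_full -mxrank_tr tr_col_mx !trmxK.
  have : row_free (row_mx MV ones).
    rewrite -kermx_eq0 -submx0; apply/row_subP=> i.
    have /sub_kermxP := row_sub i (kermx (row_mx MV ones)).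
    rewrite mul_mx_row -row_mx0 => /eq_row_mx[h1 h2].
    by rewrite (inj _ h1 h2) sub0mx.
  by rewrite /row_free.
by rewrite -[MU]mul1mx (submx_trans _ sBU) // submxMr // sub1mx.
Qed.

Lemma pair_sub m n (X : 'I_N -> 'M[F]_m) (Y : 'I_N -> 'M[F]_n) (t : F) :
  (forall a a' b b',
     \sum_i X i a a' * Y i b b' = t * ((a == a') && (b == b'))%:R) ->
  ((\matrix_i mxvec (Y i))^T *m (\matrix_i mxvec (X i))
     <= mxvec (1%:M : 'M[F]_m))%MS.
Proof.
move=> HXY; apply/row_subP=> q; case/mxvec_indexP: q => b b'.
have -> : row (mxvec_index b b') ((\matrix_i mxvec (Y i))^T *m
            (\matrix_i mxvec (X i))) =
          (t * (b == b')%:R) *: mxvec (1%:M : 'M[F]_m).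
  apply/rowP=> p; case/mxvec_indexP: p => a a'.
  rewrite !mxE; rewrite mxvecE mxE.
  under eq_bigr => i _ do rewrite !mxE !mxvecE.
  rewrite (eq_bigr (fun i => X i a a' * Y i b b')) => [|i _]; last exact: mulrC.
  by rewrite HXY andbC -mulrA -natrM mulnb.
by rewrite scalemx_sub.
Qed.

End Gen3.
Section Gen4.
Variables (F : closedFieldType) (gT : finGroupType) (G P : {group gT}).
Hypothesis sPG : P \subset G.
Local Notation N := #|rcosets P G|.
Variables (m n : nat) (rU : mx_representation F G m) (rV : mx_representation F G n).
Variables (ZU : 'M[F]_m) (ZV : 'M[F]_n).
Hypotheses (cU : centP P rU ZU) (cV : centP P rV ZV).
Hypothesis irrT : mx_irreducible (tens_repr rU rV).

Lemma tens_entries : exists t : F, forall a a' b b',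
  \sum_(i < N) Zc rU ZU i a a' * Zc rV ZV i b b' = t * ((a == a') && (b == b'))%:R.
Proof.
pose T := \sum_(i < N) (Zc rU ZU i *t Zc rV ZV i).
have cT : centgmx (tens_repr rU rV) T.
  apply: (sum_cent sPG) => g i Gg /=.
  by rewrite !(ZcS sPG) // !tensmx_mul.
have /is_scalar_mxP[t Et] := cent_scalar irrT cT.
exists t => a a' b b'.
have := congr1 (fun M : 'M[F]_(m * n) => M (mxtens_index (a, b)) (mxtens_index (a', b'))) Et.
rewrite /= summxE => E.
rewrite (eq_bigr (fun k => (Zc rU ZU k *t Zc rV ZV k)
   (mxtens_index (a, b)) (mxtens_index (a', b')))) => [|k _]; last first.
  by rewrite tensmxE.
rewrite E mxE (inj_eq (can_inj (@mxtens_indexK _ _))) xpair_eqE.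
by rewrite mulr_natr.
Qed.

End Gen4.
Section Gen5.
Variables (F : closedFieldType) (gT : finGroupType) (G P : {group gT}).
Hypothesis sPG : P \subset G.
Local Notation N := #|rcosets P G|.
Local Notation W := (induced_triv_repr F P G).
Local Notation ones := (@ones F gT G P).
Local Notation Smx := (@Smx F gT G P).

Lemma fixed_col_const (phi : 'cV[F]_N) :
  (forall g, g \in G -> W g *m phi = phi) -> phi = phi (Ordinal (N_gt0 G P)) 0 *: ones.
Proof.
move=> Hphi; apply/colP=> j; rewrite !mxE mulr1.
have [g Gg Ej] := sigma_trans sPG j (Ordinal (N_gt0 G P)).
have /colP/(_ j) := Hphi g Gg; rewrite mxE (bigD1 (sigma g j)) //=.
rewrite coset_mxE // eqxx mul1r big1 ?addr0 => [<-|l nl]; first by rewrite Ej.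
by rewrite coset_mxE // eq_sym (negbTE nl) mul0r.
Qed.

Lemma split_case a (rA : mx_representation F G a) (K : 'M[F]_N) (x : 'rV[F]_N) :
  mx_irreducible rA ->
  mx_rsim W (dsum_repr (triv_repr F G) rA) ->
  mxmodule W K -> x != 0 -> (x <= K)%MS -> (x <= Smx)%MS ->
  (Smx <= K)%MS.
Proof.
move=> irrA [B eqN freeB homB] modK nzx xK xS.
pose pA : 'M[F]_(1 + a, a) := col_mx 0 1%:M.
pose e0 : 'cV[F]_(1 + a) := col_mx 1%:M 0.
pose phi := B *m e0.
have Hphi : forall g, g \in G -> W g *m phi = phi.
  move=> g Gg; rewrite /phi mulmxA homB //= -mulmxA /e0 mul_block_col.
  by rewrite !mulmx0 mulmx1 mul0mx addr0 add0r.
have Ephi := fixed_col_const Hphi; set c := phi _ 0 in Ephi.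
have inj0 : forall w : 'rV[F]_N, w *m (B *m pA) = 0 -> (w <= Smx)%MS -> w = 0.
  move=> w h1; rewrite sub_Smx => /eqP h2.
  have hw : w *m phi = 0 by rewrite Ephi -scalemxAr h2 scaler0.
  move: h1 hw; rewrite /phi !mulmxA -[w *m B]hsubmxK !mul_row_col.
  rewrite !mulmx0 !mulmx1 add0r addr0 => h1 hw.
  apply: (row_free_inj freeB); rewrite mul0mx -[w *m B]hsubmxK.
  by rewrite h1 hw row_mx0.
pose X := (K :&: Smx)%MS.
have modX : mxmodule W X by apply: capmx_module => //; apply: Smx_module.
have modXA : mxmodule rA (X *m (B *m pA)).
  apply/mxmoduleP=> g Gg.
  have -> : X *m (B *m pA) *m rA g = X *m W g *m (B *m pA).
    rewrite -!mulmxA; congr (_ *m _); rewrite [RHS]mulmxA homB // -mulmxA.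
    congr (_ *m _); rewrite /= /pA mul_block_col mul_col_mx.
    by rewrite !mulmx0 !mul0mx !mulmx1 !mul1mx addr0 add0r.
  by rewrite submxMr // (mxmoduleP modX).
have xX : (x <= X)%MS by rewrite sub_capmx xK.
have nzXA : X *m (B *m pA) != 0.
  apply: contraNneq nzx => h0.
  apply/eqP; apply: inj0 xS; apply/eqP.
  by have h := submxMr (B *m pA) xX; rewrite h0 in h; rewrite (submx0null h).
have fullXA : row_full <<X *m (B *m pA)>>%MS.
  apply: ((mx_irrP rA).1 irrA).2; first by rewrite (eqmx_module _ (genmxE _)).
  by rewrite -mxrank_eq0 genmxE mxrank_eq0.
have rkXA : \rank (X *m (B *m pA)) = a.
  by move: fullXA; rewrite /row_full genmxE => /eqP.
have cap0 : \rank (X :&: kermx (B *m pA))%MS = 0%N.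
  apply/eqP; rewrite mxrank_eq0 -submx0; apply/row_subP=> i.
  have ri := row_sub i (X :&: kermx (B *m pA))%MS.
  rewrite submx0; apply/eqP; apply: inj0.
    by apply/sub_kermxP; apply: submx_trans ri (capmxSr _ _).
  by apply: submx_trans ri (submx_trans (capmxSl _ _) (capmxSr _ _)).
have rkX := mxrank_mul_ker X (B *m pA); rewrite rkXA cap0 addn0 in rkX.
have sXS : (X <= Smx)%MS by apply: capmxSr.
have : (Smx <= X)%MS.
  rewrite -(mxrank_leqif_sup sXS) rank_Smx -rkX eqN.
  by [].
by move/submx_trans; apply; apply: capmxSl.
Qed.

End Gen5.
Section Gen6.
Variables (F : closedFieldType) (gT : finGroupType) (G P : {group gT}).
Hypothesis sPG : P \subset G.
Local Notation N := #|rcosets P G|.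
Local Notation W := (induced_triv_repr F P G).
Local Notation ones := (@ones F gT G P).
Local Notation Smx := (@Smx F gT G P).
Variables (a : nat) (rA : mx_representation F G a).
Hypothesis irrA : mx_irreducible rA.
Hypothesis ntA : ~ mx_rsim rA (triv_repr F G).
Hypothesis uni : mx_uniserial W.
Variables (M1 M2 : 'M[F]_N) (mod1 : mxmodule W M1) (mod2 : mxmodule W M2).
Hypothesis sM12 : (M1 <= M2)%MS.
Hypothesis r1 : mx_rsim (submod_repr mod1) (triv_repr F G).
Hypothesis r2 : mx_rsim (section_repr mod1 mod2) rA.
Hypothesis r3 : mx_rsim (factmod_repr mod2) (triv_repr F G).

Lemma rkM1 : \rank M1 = 1%N.
Proof. exact: mxrank_rsim r1. Qed.

Lemma rkM2 : \rank M2 = N.-1.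
Proof.
have := mxrank_rsim r3; rewrite mxrank_coker => h.
have := rank_leq_row M2; have := N_gt0 G P.
move: h; move: (\rank M2) => r; lia.
Qed.

Lemma a_eq : a = (N.-1).-1.
Proof.
have := mxrank_rsim r2; rewrite genmxE => <-.
have := mxrank_in_factmod M1 M2; rewrite (addsmx_idPr sM12) rkM2 rkM1.
lia.
Qed.

Lemma eq_rank_sub m1 m2 (A : 'M[F]_(m1, N)) (B : 'M[F]_(m2, N)) :
  mxmodule W A -> mxmodule W B -> \rank A = \rank B -> (B <= A)%MS.
Proof.
move=> mA mB eAB.
have mA' : mxmodule W <<A>>%MS by rewrite (eqmx_module _ (genmxE A)).
have mB' : mxmodule W <<B>>%MS by rewrite (eqmx_module _ (genmxE B)).
case: (uni mA' mB'); rewrite !genmxE // => sAB.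
by rewrite -(mxrank_leqif_sup sAB) eAB.
Qed.

Lemma S_M2 : (M2 <= Smx)%MS.
Proof.
by apply: (eq_rank_sub (Smx_module F sPG) mod2); rewrite rank_Smx rkM2.
Qed.

Lemma M2_S : (Smx <= M2)%MS.
Proof.
by apply: (eq_rank_sub mod2 (Smx_module F sPG)); rewrite rank_Smx rkM2.
Qed.

Lemma O_M1 : (ones^T <= M1)%MS.
Proof.
by apply: (eq_rank_sub mod1 (ones_module F sPG)); rewrite rank_onesT rkM1.
Qed.

Lemma M1_O : (M1 <= ones^T)%MS.
Proof.
by apply: (eq_rank_sub (ones_module F sPG) mod1); rewrite rank_onesT rkM1.
Qed.

Lemma maxM12 : max_submod W M1 M2.
Proof.
apply/(max_submodP mod1 mod2 sM12).
exact: mx_rsim_irr (mx_rsim_sym r2) irrA.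
Qed.

Lemma uni_K (K : 'M[F]_N) (x : 'rV[F]_N) : mxmodule W K ->
  ~~ (Smx <= K)%MS -> x != 0 -> (x <= K)%MS ->
  [/\ (K <= M1)%MS, (ones^T <= K)%MS & \rank K = 1%N].
Proof.
move=> modK nSK nzx xK.
have nM2K : ~~ (M2 <= K)%MS.
  by apply: contra nSK => /(submx_trans M2_S).
have KM2 : (K <= M2)%MS by case: (uni modK mod2) => // h; rewrite h in nM2K.
have KM1 : (K <= M1)%MS.
  case: (uni modK mod1) => // M1K.
  apply/negPn/negP=> nKM1; case: maxM12 => _ /(_ K); case; split=> //.
    by rewrite ltmxE M1K.
  by rewrite ltmxE KM2.
have rK : \rank K = 1%N.
  apply/eqP; rewrite eqn_leq -{1}rkM1 mxrankS //= lt0n mxrank_eq0.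
  by apply: contraNneq nzx => K0; rewrite K0 in xK; rewrite (submx0null xK).
split=> //.
apply: submx_trans O_M1 _; rewrite -(mxrank_leqif_sup KM1) rK rkM1 //.
Qed.

Lemma sec_triv :
  (forall g, g \in G -> forall s : 'rV[F]_N, (s <= M2)%MS -> (s *m W g - s <= M1)%MS) ->
  a = 1%N -> False.
Proof.
move=> triv a1.
have secg : forall g, g \in G -> section_repr mod1 mod2 g = 1%:M.
  move=> g Gg; apply: (@val_submod_inj _ _ _ _ _ _ _).
  rewrite -[section_repr mod1 mod2 g]mul1mx.
  rewrite (val_submodJ (section_module mod1 mod2)) //.
  apply/row_matrixP=> i; rewrite row_mul.
  have : (row i (val_submod (1%:M : 'M_(\rank <<in_factmod M1 M2>>%MS)))
            <= in_factmod M1 M2)%MS.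
    apply: submx_trans (row_sub _ _) (submx_trans (val_submodP _) _).
    by rewrite genmxE.
  case/submxP=> y ->; rewrite in_factmodE mulmxA -in_factmodE.
  rewrite -in_factmodJ //; apply/eqP; rewrite -subr_eq0 -linearB /=.
  by rewrite in_factmod_eq0 triv // submxMl.
have Ag : forall g, g \in G -> rA g = 1%:M.
  by move=> g Gg; apply: (mx_rsim_scalar Gg r2); rewrite secg.
apply: ntA; exists (const_mx 1 : 'M[F]_(a, 1)) => //.
  rewrite /row_free eqn_leq rank_leq_row a1 lt0n mxrank_eq0.
  apply/negP=> /eqP/matrixP/(_ 0 0); rewrite !mxE => /eqP.
  by rewrite oner_eq0.
by move=> g Gg; rewrite Ag // mul1mx /= mulmx1.
Qed.


Lemma final_case k k2 (rU : mx_representation F G k) (ZU : 'M[F]_k)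
    (MV : 'M[F]_(N, k2)) :
  centP P rU ZU ->
  ((MV^T *m Mx P rU ZU) <= mxvec (1%:M : 'M[F]_k))%MS ->
  (ones^T <= kermx MV)%MS -> \rank (kermx MV) = 1%N ->
  (kermx (Mx P rU ZU) <= M1)%MS -> \rank (kermx (Mx P rU ZU)) = 1%N -> False.
Proof.
move=> cU hUV oV rkV KU1 rkU.
set MU := Mx P rU ZU in hUV KU1 rkU *.
have hA : (MV^T <= Smx)%MS.
  rewrite sub_Smx -[ones]trmxK -trmx_mul; apply/eqP.
  by move/sub_kermxP: oV => ->; rewrite trmx0.
have rkMVt : \rank MV^T = N.-1.
  rewrite mxrank_tr; move: rkV; rewrite mxrank_ker.
  have := rank_leq_row MV; have := N_gt0 G P; move: (\rank MV) => r; lia.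
have hc : (Smx <= MV^T)%MS.
  by rewrite -(mxrank_leqif_sup hA) rank_Smx rkMVt.
have hSU : (Smx *m MU <= mxvec (1%:M : 'M[F]_k))%MS.
  exact: submx_trans (submxMr MU hc) hUV.
have e1 := mxrankS hSU; have e2 := rank_leq_row (mxvec (1%:M : 'M[F]_k)).
have e3 : (\rank (Smx :&: kermx MU)%MS <= 1)%N.
  by rewrite -rkU mxrankS // capmxSr.
have e4 := mxrank_mul_ker Smx MU; rewrite rank_Smx in e4.
have apos : (0 < a)%N by case/mx_irrP: irrA.
have a1 : a = 1%N.
  have := a_eq; move: e1 e2 e3 e4 apos.
  move: (\rank (Smx *m MU)) (\rank (Smx :&: kermx MU)%MS) => r1' r2'; lia.
apply: sec_triv a1 => g Gg s sM2.
have sS : (s <= Smx)%MS := submx_trans sM2 S_M2.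
have sU : (s *m MU <= mxvec (1%:M : 'M[F]_k))%MS.
  exact: submx_trans (submxMr MU sS) hSU.
have : is_scalar_mx (vec_mx (s *m MU)) by rewrite -memmx1 vec_mxK.
case/is_scalar_mxP=> d Ed.
apply: submx_trans KU1; apply/sub_kermxP.
rewrite mulmxBl (Mx_equiv_row sPG) // Ed scalar_mxC -mulmxA.
rewrite -(repr_mxM _ (groupVr Gg) Gg) mulVg repr_mx1 mulmx1 -Ed vec_mxK.
by rewrite subrr.
Qed.

End Gen6.
Section Gen8.
Variables (F : closedFieldType) (gT : finGroupType) (G P : {group gT}).
Hypothesis sPG : P \subset G.
Local Notation N := #|rcosets P G|.
Local Notation W := (induced_triv_repr F P G).
Local Notation ones := (@ones F gT G P).
Local Notation Smx := (@Smx F gT G P).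

Lemma ker_module k (r : mx_representation F G k) Z :
  centP P r Z -> mxmodule W (kermx (Mx P r Z)).
Proof.
move=> cZ; apply/mxmoduleP=> g Gg; apply/sub_kermxP.
by rewrite -mulmxA (Mx_equiv sPG) // mulmxA mulmx_ker mul0mx.
Qed.

Lemma get_x k k2 (r : mx_representation F G k) (Z : 'M[F]_k)
    (MV : 'M[F]_(N, k2)) :
  mx_irreducible r -> centP P r Z -> ~~ is_scalar_mx Z ->
  (MV^T *m Mx P r Z <= mxvec (1%:M : 'M[F]_k))%MS ->
  exists2 x : 'rV[F]_N, x != 0 & (x <= kermx MV)%MS && (x <= Smx)%MS.
Proof.
move=> irr cZ nsZ hUV.
case: (eqVneq (kermx MV :&: Smx)%MS 0) => [C0|nz]; last first.
  exists (nz_row (kermx MV :&: Smx)%MS); first by rewrite nz_row_eq0.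
  by have := nz_row_sub (kermx MV :&: Smx)%MS; rewrite sub_capmx.
exfalso; case/negP: nsZ.
have hM : (Mx P r Z <= mxvec (1%:M : 'M[F]_k))%MS.
  apply: (coreA hUV (onesMx sPG irr cZ)) => x h1 h2.
  apply/eqP; rewrite -submx0 -C0 sub_capmx; apply/andP; split.
    exact/sub_kermxP.
  by rewrite sub_Smx h2.
apply: (@Zc_scalar F gT G P sPG k r Z (Ordinal (N_gt0 G P))).
by rewrite -memmx1 -rowMx (submx_trans (row_sub _ _) hM).
Qed.

End Gen8.

Local Close Scope ring_scope.
Unset Implicit Arguments.
Set Strict Implicit.

Theorem lemma8p5 (F : closedFieldType) (gT : finGroupType) (G P : {group gT})
  (ltPG : P \proper G)
  (m n : nat) (rU : mx_representation F G m) (rV : mx_representation F G n)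
  (irrU : mx_irreducible rU) (irrV : mx_irreducible rV)
  (EndU : 2 <= dim_End_res rU (proper_sub ltPG))
  (EndV : 2 <= dim_End_res rV (proper_sub ltPG))
  (hW : exists (a : nat) (rA : mx_representation F G a),
      [/\ mx_irreducible rA,
          ~ mx_rsim rA (triv_repr F G) &
          mx_rsim (induced_triv_repr F P G) (dsum_repr (triv_repr F G) rA)
          \/ (mx_uniserial (induced_triv_repr F P G) /\
              exists (M1 M2 : 'M[F]_#|rcosets P G|)
                     (mod1 : mxmodule (induced_triv_repr F P G) M1)
                     (mod2 : mxmodule (induced_triv_repr F P G) M2),
                [/\ (M1 <= M2)%MS,
                    mx_rsim (submod_repr mod1) (triv_repr F G),
                    mx_rsim (section_repr mod1 mod2) rA &
                    mx_rsim (factmod_repr mod2) (triv_repr F G)])]) :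
  ~ mx_irreducible (tens_repr rU rV).
Proof.
move=> irrT; have sPG := proper_sub ltPG.
have getZ : forall k (r : mx_representation F G k),
    1 < dim_End_res r sPG -> exists2 Z, centP P r Z & ~~ is_scalar_mx Z.
  move=> k r; rewrite /dim_End_res.
  case/(has_non_scalar_mxP (scalar_mx_cent _ _)) => Z cZ nsZ.
  exists Z => // p Pp; move: cZ; rewrite memmx_cent_envelop => /centgmxP.
  by move/(_ p Pp).
have [ZU cU nsU] := getZ _ _ EndU; have [ZV cV nsV] := getZ _ _ EndV.
have [t Ht] := tens_entries sPG cU cV irrT.
have hUV : (((Mx P rV ZV)^T *m Mx P rU ZU)%R <= mxvec (1%:M : 'M[F]_m)%R)%MS.
  exact: pair_sub Ht.
have hVU : (((Mx P rU ZU)^T *m Mx P rV ZV)%R <= mxvec (1%:M : 'M[F]_n)%R)%MS.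
  apply: (@pair_sub F gT G P n m _ _ t) => b b' a a'.
  rewrite (eq_bigr (fun i : 'I_#|rcosets P G| => (Zc rU ZU i a a' * Zc rV ZV i b b')%R)) => [|i _].
    by rewrite Ht andbC.
  exact: mulrC.
have [xV nzV /andP[xKV xSV]] := get_x sPG irrU cU nsU hUV.
have [xU nzU /andP[xKU xSU]] := get_x sPG irrV cV nsV hVU.
have nSV := nonscalar_notS sPG irrV cV nsV.
have nSU := nonscalar_notS sPG irrU cU nsU.
have mKV := ker_module sPG cV; have mKU := ker_module sPG cU.
case: hW => a [rA [irrA ntA [rsimS | [uni [M1 [M2 [mod1 [mod2 [sM12 r1 r2 r3]]]]]]]]].
  by case/negP: nSV; apply: (split_case sPG irrA rsimS mKV nzV).
have [KV1 oV rkV] := uni_K sPG irrA uni sM12 r1 r2 r3 mKV nSV nzV xKV.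
have [KU1 oU rkU] := uni_K sPG irrA uni sM12 r1 r2 r3 mKU nSU nzU xKU.
exact: (final_case sPG irrA ntA uni sM12 r1 r2 r3 cU hUV oV rkV KU1 rkU).
Qed.
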